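(* A graphic sequence $d$ is forcibly bipartite unicyclic if and only if $d=(2,2,2,2)$.
   Context: A sequence of positive integers $d=(d_1,\ldots,d_n)$ is graphic if some simple graph on $\{1,\ldots,n\}$ has vertex $i$ of degree $d_i$ (a realization). A graph is bipartite unicyclic if it is connected, bipartite, and contains exactly one cycle. A sequence is forcibly bipartite unicyclic if every realization of it is bipartite unicyclic. *)

(* Defs.v *)
From mathcomp Require Import all_boot.
Set Implicit Arguments. Unset Strict Implicit. Unset Printing Implicit Defensive.

Definition simple_graph (T : finType) (e : rel T) : Prop :=
  symmetric e /\ irreflexive e.

Definition deg (T : finType) (e : rel T) (v : T) : nat := #|[set w | e v w]|.

Definition realization (d : seq nat) (e : rel 'I_(size d)) : Prop :=
  simple_graph e /\ forall i : 'I_(size d), deg e i = nth 0 d i.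

Definition positive_seq (d : seq nat) : bool := all (fun k => 0 < k) d.

Definition graphic (d : seq nat) : Prop := exists e : rel 'I_(size d), realization e.

Definition connected (T : finType) (e : rel T) : Prop :=
  forall x y : T, connect e x y.

Definition bipartite (T : finType) (e : rel T) : Prop :=
  exists c : T -> bool, forall x y, e x y -> c x != c y.

Definition is_edge (T : finType) (e : rel T) (E : {set T}) : bool :=
  [exists x, exists y, e x y && (E == [set x; y])].

(* A cycle of the graph, viewed as a subgraph given by its edge set F:
   F is a nonempty set of edges of the graph such that every vertex is
   incident to either 0 or exactly 2 edges of F, and the subgraph formed by
   F is connected (any two vertices incident to F are joined by a path
   using only edges of F). *)
Definition is_cycle (T : finType) (e : rel T) (F : {set {set T}}) : Prop :=
  [/\ F != set0,
      (forall E, E \in F -> is_edge e E),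
      (forall v : T, #|[set E in F | v \in E]| = 0 \/ #|[set E in F | v \in E]| = 2)
    & (forall x y : T, (exists2 E, E \in F & x \in E) -> (exists2 E, E \in F & y \in E) ->
         connect (fun a b => [set a; b] \in F) x y)].

Definition has_unique_cycle (T : finType) (e : rel T) : Prop :=
  exists F, is_cycle e F /\ forall F', is_cycle e F' -> F' = F.

Definition bipartite_unicyclic (T : finType) (e : rel T) : Prop :=
  [/\ connected e, bipartite e & has_unique_cycle e].

Definition forcibly_bipartite_unicyclic (d : seq nat) : Prop :=
  forall e : rel 'I_(size d), realization e -> bipartite_unicyclic e.

(* Main.v *)
Require Import Defs.
From mathcomp Require Import all_boot.
Set Implicit Arguments. Unset Strict Implicit. Unset Printing Implicit Defensive.

Lemma doubleton_eq (T : finType) (a b p q : T) :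
  [set a; b] = [set p; q] -> (a == p) && (b == q) || (a == q) && (b == p).
Proof.
move=> E.
have ha : a \in [set p; q] by rewrite -E set21.
have hb : b \in [set p; q] by rewrite -E set22.
have hp : p \in [set a; b] by rewrite E set21.
have hq : q \in [set a; b] by rewrite E set22.
move: ha hb hp hq; rewrite !inE.
case: (a =P p) => [->|nap] /=.
  move=> _ /orP[/eqP->|->//] _ /orP[]/eqP->; by rewrite eqxx ?orbT.
move=> /eqP ea _; subst a; move=> /orP[/eqP E1|/eqP->]; first by case: nap.
by rewrite !eqxx.
Qed.

Lemma edge_pair (T : finType) (e : rel T) (a b : T) :
  symmetric e -> is_edge e [set a; b] -> e a b.
Proof.
move=> sym /existsP[p /existsP[q /andP[epq /eqP E]]].
by case/orP: (doubleton_eq E) => /andP[/eqP-> /eqP->] //; rewrite sym.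
Qed.

Lemma pair_edge (T : finType) (e : rel T) (a b : T) : e a b -> is_edge e [set a; b].
Proof. by move=> eab; apply/existsP; exists a; apply/existsP; exists b; rewrite eab eqxx. Qed.

Lemma other_edge (T : finType) (e : rel T) (F : {set {set T}}) (v u : T) :
  symmetric e -> (forall E, E \in F -> is_edge e E) ->
  (#|[set E in F | v \in E]| = 0 \/ #|[set E in F | v \in E]| = 2) ->
  [set v; u] \in F -> exists w, [/\ e v w, w != u & [set v; w] \in F].
Proof.
move=> sym Fe Fc Hin.
set A := [set E in F | v \in E].
have vA : [set v; u] \in A by rewrite inE Hin set21.
have c2 : #|A| = 2.
  case: Fc => // c0; have : 0 < #|A| by rewrite card_gt0; apply/set0Pn; exists [set v; u].
  by rewrite c0.
have : 0 < #|A :\ [set v; u]| by move: c2; rewrite (cardsD1 [set v; u]) vA add1n => [[->]].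
rewrite card_gt0 => /set0Pn[E]; rewrite !inE => /andP[nE /andP[EF vE]].
case/existsP: (Fe E EF) => p /existsP[q /andP[epq /eqP EE]].
move: vE nE; rewrite EE !inE => /orP[]/eqP vp nE; subst v.
  exists q; split => //; last by rewrite -EE.
  by move: nE; apply: contra_neq => ->.
exists p; split; first by rewrite sym.
  by move: nE; apply: contra_neq => ->; rewrite setUC.
by rewrite setUC -EE.
Qed.

Definition pe (T : eqType) (u v p q : T) : bool :=
  ((u == p) && (v == q)) || ((u == q) && (v == p)).

Definition sw (T : finType) (e : rel T) (a y x z : T) : rel T :=
  fun u v => (e u v && ~~ pe u v a y && ~~ pe u v x z) || pe u v a x || pe u v y z.

Lemma card_swap (T : finType) (A : {set T}) (y x : T) :
  y \in A -> x \notin A -> #|x |: (A :\ y)| = #|A|.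
Proof.
move=> yA xA; rewrite cardsU1 (cardsD1 y A) yA !inE.
by rewrite (negbTE xA) andbF.
Qed.

Lemma pe_sym (T : eqType) (u v p q : T) : pe u v p q = pe v u p q.
Proof. by rewrite /pe orbC andbC [X in _ || X]andbC. Qed.

Lemma pe_irr (T : eqType) (u p q : T) : p != q -> pe u u p q = false.
Proof.
move=> npq; rewrite /pe; apply/negbTE; apply/negP => /orP[]/andP[/eqP a /eqP b];
  by move: npq; rewrite -a -b eqxx.
Qed.

Lemma sw_real (d : seq nat) (e : rel 'I_(size d)) (a y x z : 'I_(size d)) :
  realization e -> e a y -> e x z -> ~~ e a x -> ~~ e y z ->
  a != x -> a != y -> a != z -> x != y -> x != z -> y != z ->
  realization (sw e a y x z).
Proof.
move=> [[sym irr] Hdeg] eay exz nax nyz hax hay haz hxy hxz hyz.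
have hxa : x != a by rewrite eq_sym.
have hya : y != a by rewrite eq_sym.
have hza : z != a by rewrite eq_sym.
have hyx : y != x by rewrite eq_sym.
have hzx : z != x by rewrite eq_sym.
have hzy : z != y by rewrite eq_sym.
split; first split.
- by move=> u v; rewrite /sw sym (pe_sym u) (pe_sym u v x) (pe_sym u v a x) (pe_sym u v y z).
- by move=> u; rewrite /sw irr !pe_irr.
move=> i; rewrite -Hdeg /deg.
have eya : e y a by rewrite sym.
have ezx : e z x by rewrite sym.
have nxa : ~~ e x a by rewrite sym.
have nzy : ~~ e z y by rewrite sym.
case: (i =P a) => [->|nia].
  rewrite -(@card_swap _ [set w | e a w] y x) ?inE //; apply: eq_card => w.
  rewrite !inE /sw /pe !eqxx /= (negbTE hay) (negbTE hax) (negbTE haz) /=.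
  by case: (w == x); case: (w == y); case: (e a w).
case: (i =P y) => [->|niy].
  rewrite -(@card_swap _ [set w | e y w] a z) ?inE //; apply: eq_card => w.
  rewrite !inE /sw /pe !eqxx /= (negbTE hya) (negbTE hyx) (negbTE hyz) /=.
  by case: (w == z); case: (w == a); case: (e y w).
case: (i =P x) => [->|nix].
  rewrite -(@card_swap _ [set w | e x w] z a) ?inE //; apply: eq_card => w.
  rewrite !inE /sw /pe !eqxx /= (negbTE hxa) (negbTE hxy) (negbTE hxz) /=.
  by case: (w == z); case: (w == a); case: (e x w).
case: (i =P z) => [->|niz].
  rewrite -(@card_swap _ [set w | e z w] x y) ?inE //; apply: eq_card => w.
  rewrite !inE /sw /pe !eqxx /= (negbTE hza) (negbTE hzx) (negbTE hzy) /=.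
  by case: (w == y); case: (w == x); case: (e z w).
apply: eq_card => w; rewrite !inE /sw /pe.
move/eqP/negbTE: nia => ->; move/eqP/negbTE: niy => ->.
move/eqP/negbTE: nix => ->; move/eqP/negbTE: niz => ->.
by rewrite /= !andbT !orbF.
Qed.

Lemma col2 (T : Type) (c : T -> bool) u v w : c u != c v -> c v != c w -> c u = c w.
Proof. by case: (c u); case: (c v); case: (c w). Qed.

Lemma p5_false (d : seq nat) (e : rel 'I_(size d)) (c : 'I_(size d) -> bool)
  (y a b x z : 'I_(size d)) :
  forcibly_bipartite_unicyclic d -> realization e ->
  (forall u v, e u v -> c u != c v) ->
  e y a -> e a b -> e b x -> e x z -> a != x -> y != b -> z != b -> y != z -> False.
Proof.
move=> Hf He Hc eya eab ebx exz hax hyb hzb hyz.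
have [[sym irr] _] := He.
have cax : c a = c x by apply: (col2 (Hc _ _ eab) (Hc _ _ ebx)).
have nax : ~~ e a x by apply/negP => /Hc; rewrite cax eqxx.
have cyz : c y = c z.
  have h1 := Hc _ _ eya; have h2 := Hc _ _ exz; move: h1 h2; rewrite cax.
  by case: (c y); case: (c x); case: (c z).
have nyz : ~~ e y z by apply/negP => /Hc; rewrite cyz eqxx.
have hay : a != y by apply/negP => /eqP E; move: eya; rewrite E irr.
have hxz : x != z by apply/negP => /eqP E; move: exz; rewrite E irr.
have hxy : x != y.
  by apply/negP => /eqP E; move: (Hc _ _ eya); rewrite -E -cax eqxx.
have haz : a != z.
  by apply/negP => /eqP E; move: (Hc _ _ exz); rewrite -E cax eqxx.
have eay : e a y by rewrite sym.
have He' := sw_real He eay exz nax nyz hax hay haz hxy hxz hyz.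
have [_ [c' Hc'] _] := Hf _ He'.
have hab : a != b by apply/negP => /eqP E; move: eab; rewrite E irr.
have hbx : b != x by apply/negP => /eqP E; move: ebx; rewrite E irr.
have hba : b != a by rewrite eq_sym.
have hby : b != y by rewrite eq_sym.
have hbz : b != z by rewrite eq_sym.
have s1 : sw e a y x z a b.
  by rewrite /sw /pe eab ?eqxx ?(negbTE hab) ?(negbTE hby) ?(negbTE hax) ?(negbTE haz) ?(negbTE hay).
have s2 : sw e a y x z b x.
  by rewrite /sw /pe ebx ?eqxx ?(negbTE hba) ?(negbTE hbx) ?(negbTE hby) ?(negbTE hbz).
have s3 : sw e a y x z a x by rewrite /sw /pe !eqxx orbT.
move: (Hc' _ _ s1) (Hc' _ _ s2) (Hc' _ _ s3).
by case: (c' a); case: (c' b); case: (c' x).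
Qed.

Lemma c4_false (d : seq nat) (e : rel 'I_(size d)) (c : 'I_(size d) -> bool)
  (a b x y w : 'I_(size d)) :
  forcibly_bipartite_unicyclic d -> realization e ->
  (forall u v, e u v -> c u != c v) ->
  e a b -> e b x -> e x y -> e y a -> a != x -> b != y ->
  e a w -> w != b -> w != y -> False.
Proof.
move=> Hf He Hc eab ebx exy eya hax hby eaw hwb hwy.
have [[sym irr] _] := He.
have ewa : e w a by rewrite sym.
by apply: (p5_false Hf He Hc ewa eab ebx exy hax hwb) => //; rewrite eq_sym.
Qed.

Lemma nbr2 (T : finType) (e : rel T) (a b x y : T) :
  irreflexive e -> e a b -> e a y -> ~~ e a x -> b != y ->
  a != b -> a != y -> x != b -> x != y ->
  (forall w, [|| w == a, w == b, w == x | w == y]) -> deg e a = 2.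
Proof.
move=> irr eab eay nax hby hab hay hxb hxy Hall.
rewrite /deg.
have -> : [set w | e a w] = [set b; y].
  apply/setP => w; rewrite !inE.
  case/or4P: (Hall w) => /eqP->; rewrite ?irr ?eab ?eay ?eqxx ?orbT //.
    by rewrite (negbTE hab) (negbTE hay).
  by rewrite (negbTE nax) (negbTE hxb) (negbTE hxy).
by rewrite cards2 hby.
Qed.

Lemma forward (d : seq nat) : graphic d -> forcibly_bipartite_unicyclic d -> d = [:: 2; 2; 2; 2].
Proof.
move=> [e He] Hf.
have [[sym irr] Hdeg] := He.
have [Hcon [c Hc] [F [[F0 Fe Fdeg Fcon] _]]] := Hf e He.
case/set0Pn: F0 => E EF.
case/existsP: (Fe E EF) => a /existsP[b /andP[eab /eqP EE]].
rewrite EE in EF.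
have [y [eay hyb Fay]] := other_edge sym Fe (Fdeg a) EF.
have Fba : [set b; a] \in F by rewrite setUC.
have [x [ebx hxa Fbx]] := other_edge sym Fe (Fdeg b) Fba.
have Fxb : [set x; b] \in F by rewrite setUC.
have [z [exz hzb Fxz]] := other_edge sym Fe (Fdeg x) Fxb.
have eya : e y a by rewrite sym.
have hax : a != x by rewrite eq_sym.
case: (z =P y) => [Ezy|/eqP hzy]; last first.
  by exfalso; apply: (p5_false Hf He Hc eya eab ebx exz hax hyb hzb); rewrite eq_sym.
subst z.
have hby : b != y by rewrite eq_sym.
have cax := col2 (Hc _ _ eab) (Hc _ _ ebx).
have cby := col2 (Hc _ _ ebx) (Hc _ _ exz).
have nax : ~~ e a x by apply/negP => /Hc; rewrite cax eqxx.
have nby : ~~ e b y by apply/negP => /Hc; rewrite cby eqxx.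
have neq : forall u v, e u v -> u != v.
  by move=> u v euv; apply/negP => /eqP E0; move: euv; rewrite E0 irr.
have hab := neq _ _ eab; have hbx := neq _ _ ebx; have hxy := neq _ _ exz.
have hya := neq _ _ eya.
have hba : b != a by rewrite eq_sym.
have hxb : x != b by rewrite eq_sym.
have hyx : y != x by rewrite eq_sym.
have hay : a != y by rewrite eq_sym.
have eba : e b a by rewrite sym.
have exb : e x b by rewrite sym.
have eyx : e y x by rewrite sym.
have nbx' : ~~ e x a by rewrite sym.
have nyb : ~~ e y b by rewrite sym.
pose S := [:: a; b; x; y].
have closedS : forall s w, s \in S -> e s w -> w \in S.
  move=> s w; rewrite !inE => /or4P[]/eqP-> esw; apply/negPn/negP;
    rewrite !negb_or => /and4P[hwa hwb hwx hwy].
  - exact: (c4_false Hf He Hc eab ebx exz eya hax hby esw hwb hwy).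
  - exact: (c4_false Hf He Hc ebx exz eya eab hby hxa esw hwx hwa).
  - exact: (c4_false Hf He Hc exz eya eab ebx hxa hyb esw hwy hwb).
  - exact: (c4_false Hf He Hc eya eab ebx exz hyb hax esw hwa hwx).
have cl : closed e S.
  move=> u w euw; apply/idP/idP => [/closedS|/closedS]; first exact.
  by apply; rewrite sym.
have allS : forall v, v \in S.
  by move=> v; rewrite -(closed_connect cl (Hcon a v)) inE eqxx.
have uS : uniq S.
  by rewrite /= !inE !negb_or hab hax hay hbx hby hxy.
have Hsize : size d = 4.
  have c1 : #|'I_(size d)| <= #|S|.
    by apply: subset_leq_card; apply/subsetP => v _; exact: allS.
  have c2 : #|S| <= #|'I_(size d)| by apply: max_card.
  rewrite card_ord (card_uniqP uS) in c1 c2.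
  by apply/eqP; rewrite eqn_leq c1 c2.
have Hall : forall w, [|| w == a, w == b, w == x | w == y].
  by move=> w; move: (allS w); rewrite !inE.
have deg2 : forall v, deg e v = 2.
  move=> v; case/or4P: (Hall v) => /eqP->.
  - exact: (nbr2 irr eab eay nax hby hab hay hxb hxy Hall).
  - apply: (nbr2 irr ebx eba nby hxa hbx hba hyx hya) => w.
    by move: (Hall w); case: (w == a); case: (w == b); case: (w == x); case: (w == y).
  - apply: (nbr2 irr exz exb nbx' hyb hxy hxb hay hab) => w.
    by move: (Hall w); case: (w == a); case: (w == b); case: (w == x); case: (w == y).
  - apply: (nbr2 irr eya eyx nyb hax hya hyx hba hbx) => w.
    by move: (Hall w); case: (w == a); case: (w == b); case: (w == x); case: (w == y).
apply: (@eq_from_nth _ 0); first by rewrite Hsize.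
move=> i hi; have := Hdeg (Ordinal hi); rewrite deg2 => <-.
by move: hi; rewrite Hsize; case: i => [|[|[|[|i]]]].
Qed.

Lemma two_reg_unique (T : finType) (e : rel T) (a0 : T) :
  symmetric e -> irreflexive e -> (forall v, deg e v = 2) -> connected e ->
  has_unique_cycle e.
Proof.
move=> sym irr H2 Hcon.
pose F0 := [set E | is_edge e E].
have inF0 : forall p q, ([set p; q] \in F0) = e p q.
  by move=> p q; rewrite inE; apply/idP/idP => [/(edge_pair sym)|/pair_edge].
have cnt : forall v, [set E in F0 | v \in E] = [set [set v; w] | w in [set w | e v w]].
  move=> v; apply/setP => E; rewrite !inE; apply/andP/imsetP.
  - case=> /existsP[p /existsP[q /andP[epq /eqP->]]]; rewrite !inE => /orP[]/eqP->.
      by exists q; rewrite ?inE.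
    by exists p; [rewrite inE sym | rewrite setUC].
  - by case=> w; rewrite inE => evw ->; rewrite pair_edge // set21.
have card2 : forall v, #|[set E in F0 | v \in E]| = 2.
  move=> v; rewrite cnt card_in_imset; first exact: H2.
  move=> w1 w2; rewrite !inE => e1 e2 /doubleton_eq /orP[/andP[_ /eqP]//|/andP[/eqP E1 _]].
  by move: e2; rewrite -E1 irr.
exists F0; split.
  split.
  - have : 0 < #|[set w | e a0 w]| by move: (H2 a0); rewrite /deg => ->.
    rewrite card_gt0 => /set0Pn[w]; rewrite inE => ew.
    by apply/set0Pn; exists [set a0; w]; rewrite inF0.
  - by move=> E; rewrite inE.
  - by move=> v; right; exact: card2.
  - move=> x y _ _.
    have eq : (fun a b => [set a; b] \in F0) =2 e by move=> p q; exact: inF0.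
    by rewrite (eq_connect eq); exact: Hcon.
move=> F' [F'0 F'e F'deg F'con].
have prop : forall u v w, [set u; v] \in F' -> e u w -> [set u; w] \in F'.
  move=> u v w Fuv euw.
  have [w' [euw' hw'v Fuw']] := other_edge sym F'e (F'deg u) Fuv.
  have euv : e u v by apply: (edge_pair sym); exact: F'e.
  case: (w =P v) => [->//|/eqP hwv]; case: (w =P w') => [->//|/eqP hww'].
  exfalso.
  have : #|[:: v; w'; w]| <= #|[set t | e u t]|.
    by apply: subset_leq_card; apply/subsetP => t; rewrite !inE => /or3P[]/eqP->.
  rewrite (card_uniqP _) /=; first by rewrite -/(deg e u) H2.
  by rewrite !inE !negb_or eq_sym hw'v eq_sym hwv eq_sym hww'.
pose pQ := [pred u | [exists E, (E \in F') && (u \in E)]].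
have norm : forall u, u \in pQ -> exists v, [set u; v] \in F'.
  move=> u; rewrite inE => /existsP[E /andP[EF uE]].
  case/existsP: (F'e E EF) => p /existsP[q /andP[epq /eqP EE]].
  move: uE; rewrite EE !inE => /orP[]/eqP->; first by exists q; rewrite -EE.
  by exists p; rewrite setUC -EE.
have step : forall u w, e u w -> u \in pQ -> w \in pQ.
  move=> u w euw /norm[v Fuv]; have Fuw := prop _ _ _ Fuv euw.
  by rewrite inE; apply/existsP; exists [set u; w]; rewrite Fuw set22.
have cl : closed e pQ.
  move=> u w euw; apply/idP/idP; first exact: step.
  by apply: step; rewrite sym.
case/set0Pn: F'0 => E0 E0F.
case/existsP: (F'e E0 E0F) => p0 /existsP[q0 /andP[_ /eqP E0E]].
have p0Q : p0 \in pQ by apply/existsP; exists E0; rewrite E0F E0E set21.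
apply/setP => E; apply/idP/idP; first by move=> EF; rewrite inE; exact: F'e.
rewrite inE => /existsP[p /existsP[q /andP[epq /eqP ->]]].
have pQp : p \in pQ by rewrite -(closed_connect cl (Hcon p0 p)).
have [v Fpv] := norm _ pQp.
exact: prop _ _ _ Fpv epq.
Qed.

Lemma backward (T : finType) (e : rel T) (a : T) :
  #|T| = 4 -> simple_graph e -> (forall v, deg e v = 2) -> bipartite_unicyclic e.
Proof.
move=> c4 [sym irr] H2.
have : #|[set w | e a w]| == 2 by rewrite -/(deg e a) H2.
case/cards2P => b [y [hby Na]].
have eab : e a b by move: (set21 b y); rewrite -Na inE.
have eay : e a y by move: (set22 b y); rewrite -Na inE.
have neq : forall u v, e u v -> u != v.
  by move=> u v euv; apply/negP => /eqP E0; move: euv; rewrite E0 irr.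
have hab := neq _ _ eab; have hay := neq _ _ eay.
have [x hx] : exists x, x \notin [:: a; b; y].
  case: (boolP [exists x, x \notin [:: a; b; y]]) => [/existsP //|].
  rewrite negb_exists => /forallP H.
  have : #|T| <= #|[:: a; b; y]|.
    by apply: subset_leq_card; apply/subsetP => t _; move: (H t); rewrite negbK.
  by rewrite c4 => /leq_trans/(_ (card_size _)).
move: hx; rewrite !inE !negb_or => /and3P[hxa hxb hxy].
have nax : ~~ e a x.
  apply/negP => eax; have : x \in [set w | e a w] by rewrite inE.
  by rewrite Na !inE (negbTE hxb) (negbTE hxy).
have hba : b != a by rewrite eq_sym.
have hya : y != a by rewrite eq_sym.
have hax : a != x by rewrite eq_sym.
have hbx : b != x by rewrite eq_sym.
have hyx : y != x by rewrite eq_sym.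
have hyb : y != b by rewrite eq_sym.
have Hall : forall w, [|| w == a, w == b, w == x | w == y].
  move=> w; apply/negPn/negP; rewrite !negb_or => /and4P[hwa hwb hwx hwy].
  have : #|[:: w; a; b; x; y]| <= #|T| := max_card _.
  rewrite (card_uniqP _) ?c4 //= !inE !negb_or hwa hwb hwx hwy hab hax hay hbx hby.
  by rewrite hxy.
have nxa : ~~ e x a by rewrite sym.
have sub : [set w | e x w] \subset [set b; y].
  apply/subsetP => w; rewrite !inE; case/or4P: (Hall w) => /eqP->;
    rewrite ?irr ?eqxx ?orbT ?(negbTE nxa) //.
have eqc : #|[set w | e x w]| = #|[set b; y]| by rewrite cards2 hby -/(deg e x) H2.
have EQ := subset_cardP eqc sub.
have exb : e x b by move: (EQ b); rewrite !inE eqxx.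
have exy : e x y by move: (EQ y); rewrite !inE eqxx orbT.
have eba : e b a by rewrite sym.
have ebx : e b x by rewrite sym.
have eya : e y a by rewrite sym.
have nby : ~~ e b y.
  apply/negP => eby.
  have : #|[:: a; x; y]| <= #|[set w | e b w]|.
    by apply: subset_leq_card; apply/subsetP => t; rewrite !inE => /or3P[]/eqP->.
  rewrite (card_uniqP _) /=; first by rewrite -/(deg e b) H2.
  by rewrite !inE !negb_or hax hay hxy.
have nyb : ~~ e y b by rewrite sym.
split.
- have ca : forall u, connect e a u.
    move=> u; case/or4P: (Hall u) => /eqP->.
    + exact: connect0.
    + exact: connect1.
    + exact: connect_trans (connect1 eab) (connect1 ebx).
    + exact: connect1.
  move=> u v; apply: connect_trans (ca v).
  by rewrite (sym_connect_sym sym).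
- exists (fun w => (w == a) || (w == x)) => u v.
  case/or4P: (Hall u) => /eqP->; case/or4P: (Hall v) => /eqP->;
  rewrite /= ?irr ?eqxx ?(negbTE hab) ?(negbTE hay) ?(negbTE hxa) ?(negbTE hxb)
    ?(negbTE hxy) ?(negbTE hba) ?(negbTE hya) ?(negbTE hax) ?(negbTE hbx)
    ?(negbTE hyx) ?(negbTE hyb) ?(negbTE hby)
    ?(negbTE nax) ?(negbTE nxa) ?(negbTE nby) ?(negbTE nyb) //.
- have Hcon : connected e.
    have ca : forall u, connect e a u.
      move=> u; case/or4P: (Hall u) => /eqP->.
      + exact: connect0.
      + exact: connect1.
      + exact: connect_trans (connect1 eab) (connect1 ebx).
      + exact: connect1.
    move=> u v; apply: connect_trans (ca v).
    by rewrite (sym_connect_sym sym).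
  exact: (two_reg_unique a sym irr H2 Hcon).
Qed.

Theorem corollary8p3 (d : seq nat) :
  positive_seq d -> graphic d ->
  (forcibly_bipartite_unicyclic d <-> d = [:: 2; 2; 2; 2]).
Proof.
move=> _ Hg; split; first exact: forward.
move=> -> e He; have [Hs Hdeg] := He.
apply: (@backward _ e ord0) => //; first by rewrite card_ord.
by move=> v; rewrite Hdeg; case: v => [[|[|[|[|v]]]] hv].
Qed.
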